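(* Let $n\ge3$ and $i\ge0$. If $x^\Lambda\partial_k\in\mathcal{L}_i$, then $r_i>\mathrm{WD}(x^\Lambda\partial_k)$. In particular, if $1\le k<n-r_i+1$, then $\mathcal{L}_i\cap\mathcal{B}_k=\emptyset$.
   Context: Fix an integer $n\ge 3$. A partition is a sequence $\Lambda=(\lambda_j)_{j\ge1}$ of non-negative integers with finite support; $\mathrm{wt}(\Lambda)=\sum_j j\lambda_j$; $\mathrm{Part}(k)$ is the set of partitions with $\lambda_j=0$ for $j>k$. Write $x^\Lambda=\prod_j x_j^{\lambda_j}$, $\deg(x^\Lambda)=\sum_j\lambda_j$. $\mathcal{B}=\{x^\Lambda\partial_k : 1\le k\le n,\ \Lambda\in\mathrm{Part}(k-1)\}$ and $\mathcal{B}_u=\{x^\Lambda\partial_k\in\mathcal{B}: k=u\}$. For an integer $i\ge-1$, let $r_i\in\{1,\dots,n-1\}$ with $i\equiv r_i\pmod{n-1}$ and $h_i=\lfloor (i-1)/(n-1)\rfloor+1$. Define $\mathrm{WD}(x^\Lambda\partial_k)=\mathrm{wt}(\Lambda)-\deg(x^\Lambda)+n-k$ and $\mathrm{lev}_i(x^\Lambda\partial_k)=h_i\,\mathrm{WD}(x^\Lambda\partial_k)+\deg(x^\Lambda)-1$. For $i\ge-1$, $\mathcal{N}_i=\{b\in\mathcal{B}: \mathrm{lev}_j(b)\le j\text{ for some integer } -1\le j\le i\}$, and $\mathcal{L}_i=\mathcal{N}_i\setminus\mathcal{N}_{i-1}$ for $i\ge0$. *)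

(* Defs.v *)
From mathcomp Require Import all_boot all_order all_algebra.
Set Implicit Arguments. Unset Strict Implicit. Unset Printing Implicit Defensive.
Import Order.TTheory GRing.Theory Num.Theory.
Local Open Scope ring_scope.

(* A partition Lambda = (lambda_j)_{j>=1} is represented by a finite list
   [lam] with lambda_j = nth 0 lam (j-1) (entries beyond the list are 0).
   A basis element x^Lambda d_k is represented by the pair (k, lam). *)

Definition inPart (m : nat) (lam : seq nat) : Prop :=
  forall j : nat, (m <= j)%N -> nth 0%N lam j = 0%N.

Definition wt (lam : seq nat) : nat :=
  (\sum_(j < size lam) (j.+1 * nth 0%N lam j))%N.

Definition deg (lam : seq nat) : nat := sumn lam.

Definition inB (n k : nat) (lam : seq nat) : Prop :=
  (1 <= k <= n)%N /\ inPart (k - 1) lam.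

(* r_i \in {1,...,n-1}, r_i = i mod (n-1) *)
Definition r_ (n : nat) (i : int) : int := ((i - 1) %% (n - 1)%:Z)%Z + 1.

Definition h_ (n : nat) (i : int) : int := ((i - 1) %/ (n - 1)%:Z)%Z + 1.

Definition WD (n k : nat) (lam : seq nat) : int :=
  (wt lam)%:Z - (deg lam)%:Z + n%:Z - k%:Z.

Definition lev (n : nat) (i : int) (k : nat) (lam : seq nat) : int :=
  h_ n i * WD n k lam + (deg lam)%:Z - 1.

Definition inN (n : nat) (i : int) (k : nat) (lam : seq nat) : Prop :=
  inB n k lam /\ exists j : int, -1 <= j /\ j <= i /\ lev n j k lam <= j.

Definition inL (n : nat) (i : int) (k : nat) (lam : seq nat) : Prop :=
  inN n i k lam /\ ~ inN n (i - 1) k lam.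

(* Main.v *)
Require Import Defs.
From mathcomp Require Import all_boot all_order all_algebra.
From mathcomp Require Import zify ring.
Import Order.TTheory GRing.Theory Num.Theory.
Local Open Scope ring_scope.

Lemma deg_big (lam : seq nat) :
  deg lam = (\sum_(j < size lam) nth 0%N lam j)%N.
Proof. by rewrite /deg sumnE (big_nth 0%N) big_mkord. Qed.

Lemma deg_le_wt (lam : seq nat) : (deg lam <= wt lam)%N.
Proof.
rewrite deg_big /wt; apply: leq_sum => j _.
by rewrite mulSn leq_addr.
Qed.

Lemma wt_le_part m (lam : seq nat) : inPart m lam -> (wt lam <= m * deg lam)%N.
Proof.
move=> hP; rewrite deg_big /wt big_distrr /=; apply: leq_sum => j _.
case: (ltnP j m) => hj; first by rewrite leq_mul2r hj orbT.
by rewrite hP // muln0.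
Qed.

Theorem proposition2p9 (n : nat) (i : int) :
  (3 <= n)%N -> 0 <= i ->
  (forall (k : nat) (lam : seq nat),
      inL n i k lam -> WD n k lam < r_ n i) /\
  (forall (k : nat), (1 <= k)%N -> k%:Z < n%:Z - r_ n i + 1 ->
      forall lam : seq nat, ~ (inB n k lam /\ inL n i k lam)).
Proof.
move=> hn hi.
have part1 : forall (k : nat) (lam : seq nat),
      inL n i k lam -> WD n k lam < r_ n i.
  move=> k lam [[hB [j [hj1 [hj2 hlev]]]] hnot].
  have hji : j = i.
    apply/eqP; rewrite eq_le hj2 /=; rewrite leNgt; apply/negP => hlt.
    apply: hnot; split => //; exists j; split => //; split => //; lia.
  subst j.
  set d : int := (n - 1)%N%:Z.
  have hd : 2 <= d by rewrite /d; lia.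
  have hd0 : d != 0 by apply/eqP; lia.
  set q := ((i - 1) %/ d)%Z.
  set rm := ((i - 1) %% d)%Z.
  have e1 : i - 1 = q * d + rm by exact: divz_eq.
  have rm0 : 0 <= rm by exact: modz_ge0.
  have rmd : rm < d by apply: ltz_pmod; lia.
  have hr : r_ n i = rm + 1 by [].
  have hh : h_ n i = q + 1 by [].
  rewrite hr.
  have [i0 | i1] := eqVneq i 0.
  -
    subst i.
    have hq : q = -1.
      rewrite /q; have -> : (0 - 1 : int) = (-1) * d + (d - 1) by ring.
      rewrite divzMDl // divz_small; last lia. ring.
    have hrm : rm = d - 1 by lia.
    have hm1 : ~ (lev n (-1) k lam <= -1).
      move=> h; apply: hnot; split => //; exists (-1); split => //; split => //; lia.
    have hhm1 : h_ n (-1) = 0.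
      rewrite /h_; have -> : (-1 - 1 : int) = (-1) * d + (d - 2) by ring.
      rewrite divzMDl // divz_small; last lia. ring.
    move: hm1; rewrite /lev hhm1 mul0r => hm1.
    have hdeg : (deg lam >= 1)%N by lia.
    move: hlev; rewrite /lev hh hq addNr mul0r add0r => hdeg2.
    have hdeg1 : deg lam = 1%N by lia.
    have hw : (wt lam <= (k - 1) * deg lam)%N := @wt_le_part _ _ hB.2.
    rewrite hdeg1 muln1 in hw.
    case: hB => /andP [hk1 hkn] _.
    rewrite hrm /WD /d hdeg1; lia.
  -
    have hq0 : 0 <= q.
      rewrite /q divz_ge0; last lia. lia.
    set j := q * d.
    have hhj : h_ n j = q.
      rewrite /h_; have -> : (j - 1) = (q - 1) * d + (d - 1) by rewrite /j; ring.
      rewrite divzMDl // divz_small; last lia. ring.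
    rewrite ltNge; apply/negP => hW.
    apply: hnot; split => //; exists j; split; first by rewrite /j; nia.
    split; first lia.
    move: hlev; rewrite /lev hhj hh => hlev.
    have : (q + 1) * WD n k lam = q * WD n k lam + WD n k lam by ring.
    lia.
split => // k hk1 hk lam [hB hL].
have := part1 k lam hL.
have := deg_le_wt lam.
rewrite /WD; lia.
Qed.
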